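(* Let $\mu$ be a distribution over $\{0,1\}^V$ and $\theta\in(0,1)$. Let $(X^{(t)}_{\pi\text{-GD}})_{t\ge0}$ be the Glauber dynamics on $\pi$ started from $X^{(0)}_{\pi\text{-GD}}=\mathsf{lift}(\mathbf 1_V)$ and $(X^{(t)}_{\mu\text{-GD}})_{t\ge0}$ the Glauber dynamics on $\mu$ started from $\mathbf 1_V$. Then for every integer $t\ge0$, $X^{(t)}_{\pi\text{-GD}}$ and $\mathsf{lift}(X^{(t)}_{\mu\text{-GD}})$ are identically distributed, and $\mathsf{contr}(X^{(t)}_{\pi\text{-GD}})$ and $X^{(t)}_{\mu\text{-GD}}$ are identically distributed.
   Context: $\mathsf{lift}:\{0,1\}^V\to\{0,1,\star\}^V$ is random: independently per coordinate, $0\mapsto0$, $1\mapsto\star$ w.p. $1-\theta$, $1\mapsto1$ w.p. $\theta$ (applied with fresh independent randomness). $\mathsf{contr}$: $0\mapsto0$, $1,\star\mapsto1$ coordinatewise. $\pi$ is the law of $\mathsf{lift}(X)$ for $X\sim\mu$. Glauber dynamics on a distribution $\nu$: pick $v\in V$ uniformly and resample coordinate $v$ from $\nu$ conditioned on the other coordinates. *)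

(* Defs.v *)
From HB Require Import structures.
From mathcomp Require Import all_boot all_order all_algebra.
Set Implicit Arguments. Unset Strict Implicit. Unset Printing Implicit Defensive.
Import Order.TTheory GRing.Theory Num.Theory.
Local Open Scope ring_scope.

Inductive spin := S0 | S1 | Sstar.

Definition spin_to (s : spin) : 'I_3 :=
  match s with S0 => inord 0 | S1 => inord 1 | Sstar => inord 2 end.
Definition spin_of (i : 'I_3) : spin :=
  match val i with 0%N => S0 | 1%N => S1 | _ => Sstar end.
Lemma spin_toK : cancel spin_to spin_of.
Proof. by case; rewrite /spin_of /= inordK. Qed.

HB.instance Definition _ := Equality.copy spin (can_type spin_toK).
HB.instance Definition _ := Choice.copy spin (can_type spin_toK).
HB.instance Definition _ := Countable.copy spin (can_type spin_toK).
HB.instance Definition _ := Finite.copy spin (can_type spin_toK).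

Definition contr1 (s : spin) : bool := if s is S0 then false else true.
Definition contr (V : finType) (y : {ffun V -> spin}) : {ffun V -> bool} :=
  [ffun v => contr1 (y v)].

Section Defs.
Variable R : realFieldType.

(* probability that a single coordinate b is lifted to s *)
Definition lift1 (theta : R) (b : bool) (s : spin) : R :=
  match b, s with
  | false, S0 => 1
  | false, _ => 0
  | true, S0 => 0
  | true, S1 => theta
  | true, Sstar => 1 - theta
  end.

Definition lift_law (V : finType) (theta : R) (x : {ffun V -> bool})
  (y : {ffun V -> spin}) : R := \prod_(v : V) lift1 theta (x v) (y v).

(* pi = law of lift(X), X ~ mu *)
Definition lift_dist (V : finType) (theta : R) (mu : {ffun V -> bool} -> R)
  (y : {ffun V -> spin}) : R := \sum_(x : {ffun V -> bool}) mu x * lift_law theta x y.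

Definition contr_dist (V : finType) (p : {ffun V -> spin} -> R)
  (x : {ffun V -> bool}) : R := \sum_(y | contr y == x) p y.

Definition is_dist (T : finType) (p : T -> R) : Prop :=
  (forall x, 0 <= p x) /\ \sum_(x : T) p x = 1.

Definition upd (V : finType) (S : Type) (x : {ffun V -> S}) (v : V) (s : S) :
  {ffun V -> S} := [ffun u => if u == v then s else x u].

(* Convention:
   if the conditioning event has nu-mass 0, the chain stays put. *)
Definition glauberK (V S : finType) (nu : {ffun V -> S} -> R)
  (x y : {ffun V -> S}) : R :=
  #|V|%:R^-1 * \sum_(v : V)
    (if [forall u, (u != v) ==> (x u == y u)] then
       let Z := \sum_(s : S) nu (upd x v s) in
       (if Z == 0 then (y == x)%:R else nu y / Z)
     else 0).

Fixpoint mc_law (T : finType) (init : T -> R) (K : T -> T -> R) (t : nat) : T -> R :=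
  match t with
  | 0%N => init
  | t'.+1 => fun y => \sum_(x : T) mc_law init K t' x * K x y
  end.

Definition point_mass (T : finType) (a : T) : T -> R := fun x => (x == a)%:R.

End Defs.

(* Main.v *)
Require Import Defs.
From HB Require Import structures.
From mathcomp Require Import all_boot all_order all_algebra.
From mathcomp Require Import ring.
Import Order.TTheory GRing.Theory Num.Theory.
Local Open Scope ring_scope.
Section S.
Variable R : realFieldType.
Variable V : finType.
Variable theta : R.
Hypothesis Ht0 : 0 < theta.
Hypothesis Ht1 : theta < 1.

Lemma sum_spin (F : spin -> R) : \sum_s F s = F S0 + F S1 + F Sstar.
Proof.
rewrite (reindex spin_of); last first.
  by exists spin_to => s _; [rewrite /spin_of; case: s => [[|[|[|k]]] Hk] //=; apply/val_inj => /=; rewrite inordK|apply: spin_toK].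
rewrite !big_ord_recl big_ord0 /=.
by rewrite addr0 addrA.
Qed.

Lemma lift1_neq0 b s : lift1 theta b s != 0 -> b = contr1 s.
Proof. by case: b; case: s => //=; rewrite eqxx. Qed.

Lemma lift1_contr s : lift1 theta (contr1 s) s != 0.
Proof.
case: s => /=; first exact: oner_neq0.
  by rewrite gt_eqF.
by rewrite gt_eqF // subr_gt0.
Qed.
Local Notation L := (@lift_law R V theta).

Lemma L_nz (x : {ffun V -> bool}) y : L x y != 0 -> contr y = x.
Proof.
move=> /prodf_neq0 H; apply/ffunP => v; rewrite ffunE; symmetry.
exact: lift1_neq0 (H v isT).
Qed.

Lemma L_contr (x : {ffun V -> bool}) y : contr y != x -> L x y = 0.
Proof. by apply: contraNeq => /L_nz ->. Qed.

Lemma sumL (x : {ffun V -> bool}) : \sum_y L x y = 1.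
Proof.
rewrite /lift_law -(bigA_distr_bigA (fun i s => lift1 theta (x i) s)) /=.
apply: big1 => v _; rewrite sum_spin; case: (x v) => /=; ring.
Qed.

Lemma pi_eq (mu : {ffun V -> bool} -> R) (y : {ffun V -> spin}) : lift_dist theta mu y = mu (contr y) * L (contr y) y.
Proof.
rewrite /lift_dist (bigD1 (contr y)) //= big1 ?addr0 // => x Hx.
by rewrite L_contr ?mulr0 // eq_sym.
Qed.

Section Upd.
Variable S : finType.
Implicit Types x : {ffun V -> S}.
Lemma upd_id x v : upd x v (x v) = x.
Proof. by apply/ffunP=> u; rewrite ffunE; case: eqP => // ->. Qed.
Lemma upd_upd x v a b : upd (upd x v a) v b = upd x v b.
Proof. by apply/ffunP=> u; rewrite !ffunE; case: eqP. Qed.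
Lemma updE x v a : upd x v a v = a.
Proof. by rewrite ffunE eqxx. Qed.
Lemma upd_eq x v a : (upd x v a == x) = (a == x v).
Proof. by apply/eqP/eqP => [<-|->]; [rewrite updE | exact: upd_id]. Qed.

Lemma sum_agree x v (F : {ffun V -> S} -> R) :
  \sum_(y : {ffun V -> S}) (if [forall u, (u != v) ==> (x u == y u)] then F y else 0) =
  \sum_s F (upd x v s).
Proof.
have E (y : {ffun V -> S}) s : (y == upd x v s) = [forall u, (u != v) ==> (x u == y u)] && (s == y v).
  apply/eqP/andP => [->|[/forallP H /eqP ->]].
    split; last by rewrite updE.
    by apply/forallP => u; rewrite ffunE; case: eqP => //= _; rewrite eqxx.
  apply/ffunP => u; rewrite ffunE; case: (u =P v) => [->//|/eqP Hu].
  by apply/eqP; rewrite eq_sym; exact: (implyP (H u) Hu).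
transitivity (\sum_(y : {ffun V -> S}) \sum_s (y == upd x v s)%:R * F y).
  apply: eq_bigr => y _; under eq_bigr do rewrite E.
  case: ifP => Ha /=.
    rewrite (bigD1 (y v)) //= eqxx mul1r big1 ?addr0 // => s Hs.
    by rewrite (negbTE Hs) mul0r.
  by rewrite big1 // => s _; rewrite mul0r.
rewrite exchange_big; apply: eq_bigr => s _.
rewrite (bigD1 (upd x v s)) //= eqxx mul1r big1 ?addr0 // => y Hy.
by rewrite (negbTE Hy) mul0r.
Qed.
End Upd.

Lemma contr_upd (z : {ffun V -> spin}) v s : contr (upd z v s) = upd (contr z) v (contr1 s).
Proof. by apply/ffunP=> u; rewrite !ffunE; case: eqP. Qed.

Definition Wv (x : {ffun V -> bool}) (z : {ffun V -> spin}) v :=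
  \prod_(u | u != v) lift1 theta (x u) (z u).

Lemma L_upd (x : {ffun V -> bool}) (z : {ffun V -> spin}) v b s : L (upd x v b) (upd z v s) = Wv x z v * lift1 theta b s.
Proof.
rewrite /lift_law (bigD1 v) //= !updE mulrC; congr (_ * _).
by apply: eq_bigr => u Hu; rewrite !ffunE (negbTE Hu).
Qed.

Lemma L_upd1 (x : {ffun V -> bool}) (z : {ffun V -> spin}) v s : L x (upd z v s) = Wv x z v * lift1 theta (x v) s.
Proof. by rewrite -L_upd upd_id. Qed.

Lemma L_upd2 (x : {ffun V -> bool}) (z : {ffun V -> spin}) v b : L (upd x v b) z = Wv x z v * lift1 theta b (z v).
Proof. by rewrite -L_upd upd_id. Qed.

Lemma Wv_upd (x : {ffun V -> bool}) (z : {ffun V -> spin}) v b : Wv (upd x v b) z v = Wv x z v.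
Proof. by apply: eq_bigr => u Hu; rewrite ffunE (negbTE Hu). Qed.

Definition Gk (S : finType) (nu : {ffun V -> S} -> R) (x y : {ffun V -> S}) v :=
  if [forall u, (u != v) ==> (x u == y u)] then
    (let Z := \sum_(s : S) nu (upd x v s) in
     (if Z == 0 then (y == x)%:R else nu y / Z))
  else 0.
Arguments Gk {S}.

Lemma glauberKE (S : finType) (nu : {ffun V -> S} -> R) x y :
  glauberK nu x y = #|V|%:R^-1 * \sum_v Gk nu x y v.
Proof. by []. Qed.

Lemma agree_sym (S : finType) (y z : {ffun V -> S}) v :
  [forall u, (u != v) ==> (y u == z u)] = [forall u, (u != v) ==> (z u == y u)].
Proof. by apply: eq_forallb => u; rewrite [y u == _]eq_sym. Qed.

Lemma Zupd (S : finType) (nu : {ffun V -> S} -> R) x v a :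
  \sum_s nu (upd (upd x v a) v s) = \sum_s nu (upd x v s).
Proof. by apply: eq_bigr => s _; rewrite upd_upd. Qed.

Lemma inter_v (mu : {ffun V -> bool} -> R) (x : {ffun V -> bool}) (z : {ffun V -> spin}) v :
  \sum_y L x y * Gk (lift_dist theta mu) y z v =
  \sum_x' Gk mu x x' v * L x' z.
Proof.
set pi := lift_dist theta mu.
transitivity (\sum_(y : {ffun V -> spin}) (if [forall u, (u != v) ==> (z u == y u)] then
   L x y * (let Z := \sum_s pi (upd y v s) in if Z == 0 then (z == y)%:R else pi z / Z) else 0)).
  by apply: eq_bigr => y _; rewrite /Gk agree_sym; case: ifP => _ //; rewrite mulr0.
rewrite sum_agree.
transitivity (\sum_(x' : {ffun V -> bool}) (if [forall u, (u != v) ==> (x u == x' u)] then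
   (let Z := \sum_b mu (upd x v b) in if Z == 0 then (x' == x)%:R else mu x' / Z) * L x' z else 0)); last first.
  by apply: eq_bigr => y _; rewrite /Gk; case: ifP => _ //; rewrite mul0r.
rewrite sum_agree /=.
under eq_bigr do rewrite Zupd.
set Zm := \sum_b mu (upd x v b).
set Zp := \sum_s pi (upd z v s).
set W := Wv x z v.
have [W0|Wn0] := eqVneq W 0.
  transitivity (0 : R); [apply: big1 | symmetry; apply: big1] => s _.
    by rewrite L_upd1 -/W W0 !mul0r.
  by rewrite L_upd2 -/W W0 mul0r mulr0.
have Hx u : u != v -> x u = contr1 (z u).
  by move=> Hu; apply: lift1_neq0; move/prodf_neq0: Wn0; apply.
set c := contr z.
have xc b : upd x v b = upd c v b.
  apply/ffunP => u; rewrite !ffunE; case: eqP => // /eqP Hu. exact: Hx.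
have Wc : Wv c z v = W by rewrite -(Wv_upd c z v (x v)) -xc upd_id.
have HZm : Zm = \sum_b mu (upd c v b) by apply: eq_bigr => b _; rewrite xc.
have HZp : Zp = W * Zm.
  rewrite /Zp HZm; under eq_bigr do rewrite /pi pi_eq contr_upd L_upd Wc.
  rewrite sum_spin big_bool /=; ring.
rewrite HZp mulf_eq0 (negbTE Wn0) /=.
have [Zm0|Zmn0] := eqVneq Zm 0.
  rewrite (bigD1 (z v)) //= upd_id eqxx mulr1 big1 ?addr0; last first.
    by move=> s Hs; rewrite eq_sym upd_eq (negbTE Hs) mulr0.
  rewrite [RHS](bigD1 (x v)) //= upd_id eqxx mul1r big1 ?addr0 //.
  by move=> b Hb; rewrite upd_eq (negbTE Hb) mul0r.
rewrite -mulr_suml.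
have HL : \sum_s L x (upd z v s) = W.
  rewrite (eq_bigr (fun s => W * lift1 theta (x v) s)); last by move=> s _; rewrite L_upd1.
  rewrite -mulr_sumr sum_spin; case: (x v) => /=; ring.
rewrite HL.
rewrite (eq_bigr (fun b => mu (upd c v b) / Zm * (W * lift1 theta b (z v)))); last first.
  by move=> b _; rewrite xc L_upd2 Wc.
rewrite big_bool /= /pi pi_eq -/c.
have Lc : L c z = W * lift1 theta (contr1 (z v)) (z v).
  by rewrite -(upd_id _ c v) L_upd2 Wc /c ffunE.
have muc : mu c = mu (upd c v (contr1 (z v))).
  by congr mu; apply/ffunP => u; rewrite !ffunE; case: eqP => // ->.
rewrite Lc muc.
move: Wn0 Zmn0; case: (z v); case: (x v) => /= Wn0 Zmn0; field; rewrite ?Wn0 ?Zmn0 //.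
Qed.
Lemma inter (mu : {ffun V -> bool} -> R) (x : {ffun V -> bool}) (z : {ffun V -> spin}) :
  \sum_y L x y * glauberK (lift_dist theta mu) y z =
  \sum_x' glauberK mu x x' * L x' z.
Proof.
transitivity (\sum_y #|V|%:R^-1 * \sum_v L x y * Gk (lift_dist theta mu) y z v).
  by apply: eq_bigr => y _; rewrite glauberKE mulrCA mulr_sumr.
rewrite -mulr_sumr exchange_big.
transitivity (\sum_x' #|V|%:R^-1 * \sum_v Gk mu x x' v * L x' z); last first.
  by apply: eq_bigr => y _; rewrite glauberKE -mulrA mulr_suml.
rewrite -mulr_sumr [in RHS]exchange_big; congr (_ * _).
by apply: eq_bigr => v _; rewrite inter_v.
Qed.

Lemma contr_lift (p : {ffun V -> bool} -> R) x :
  contr_dist (lift_dist theta p) x = p x.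
Proof.
rewrite /contr_dist /lift_dist exchange_big /= (bigD1 x) //= -mulr_sumr.
have -> : \sum_(y | contr y == x) L x y = 1.
  rewrite -(sumL x) [RHS](bigID (fun y => contr y == x)) /= [X in _ = _ + X]big1 ?addr0 //.
  by move=> y Hy; rewrite L_contr.
rewrite mulr1 big1 ?addr0 // => x' Hx'; rewrite big1 // => y /eqP Hy.
by rewrite L_contr ?mulr0 // Hy eq_sym.
Qed.

End S.

Theorem lemma4p1 (R : realFieldType) (V : finType)
  (mu : {ffun V -> bool} -> R) (theta : R)
  (Hmu : is_dist mu) (Htheta0 : 0 < theta) (Htheta1 : theta < 1) :
  let pi := lift_dist theta mu in
  let one := [ffun _ : V => true] in
  let lawPi := mc_law (lift_law theta one) (glauberK pi) in
  let lawMu := mc_law (@point_mass R _ one) (glauberK mu) in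
  forall t : nat,
    lawPi t =1 lift_dist theta (lawMu t) /\
    contr_dist (lawPi t) =1 lawMu t.
Proof.
move=> pi one lawPi lawMu.
have P1 t : lawPi t =1 lift_dist theta (lawMu t).
  rewrite /lawPi /lawMu; elim: t => [|t IH] y /=.
    rewrite /lift_dist (bigD1 one) //= /point_mass eqxx mul1r big1 ?addr0 //.
    by move=> x Hx; rewrite (negbTE Hx) mul0r.
  set m := mc_law _ (glauberK mu) t.
  transitivity (\sum_x' m x' * \sum_x'' glauberK mu x' x'' * lift_law theta x'' y).
    under eq_bigr do rewrite IH.
    rewrite /lift_dist; under eq_bigr do rewrite mulr_suml.
    rewrite exchange_big; apply: eq_bigr => x' _.
    rewrite -(@inter R V theta) mulr_sumr; apply: eq_bigr => y0 _.
    by rewrite mulrA.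
  rewrite /lift_dist; under [RHS]eq_bigr do rewrite mulr_suml.
  rewrite [RHS]exchange_big; apply: eq_bigr => x' _.
  rewrite mulr_sumr; apply: eq_bigr => y0 _.
  by rewrite mulrA.
move=> t; split; first exact: P1.
move=> x; rewrite -(@contr_lift R V theta (lawMu t) x).
by apply: eq_bigr => y _; rewrite P1.
Qed.
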